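(* Let $X$ and $Y$ be real Banach spaces with $Y\neq\{0\}$. Then $L(X,Y)=\{f\in Lip_0(X,Y):\gamma(f)=0\ \text{for all}\ \gamma\in\ker(\beta_X^Y)\}$.
   Context: $Lip_0(X,Y)$ is the Banach space of Lipschitz maps $f:X\to Y$ with $f(0)=0$ and norm $Lip(f)=\sup_{x\neq y}\|f(x)-f(y)\|/\|x-y\|$; $L(X,Y)$ (bounded linear operators) is regarded as a subspace of it. For $x\in X$, $\delta_x^Y\in L(Lip_0(X,Y),Y)$ is evaluation $\delta_x^Y(f)=f(x)$. $F_Y(X)$ is the norm-closed linear span of $\{\delta_x^Y:x\in X\}$ in $L(Lip_0(X,Y),Y)$. $\beta_X^Y:F_Y(X)\to X$ is the bounded linear contraction with $\beta_X^Y(\sum_i\alpha_i\delta_{x_i}^Y)=\sum_i\alpha_ix_i$ on finite combinations, extended by continuity. *)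

(* Defs.v *)
From HB Require Import structures.
From mathcomp Require Import all_boot all_order all_algebra.
From mathcomp Require Import all_classical all_reals all_analysis.
Set Implicit Arguments. Unset Strict Implicit. Unset Printing Implicit Defensive.
Import Order.TTheory GRing.Theory Num.Theory.
Import numFieldNormedType.Exports.
Local Open Scope classical_set_scope.
Local Open Scope ring_scope.

Section LipFree.
Variables (R : realType) (X Y : completeNormedModType R).

Definition lip_quotients (f : X -> Y) : set R :=
  [set r | exists x y : X, x != y /\ r = `|f x - f y| / `|x - y|].

Definition Lipnorm (f : X -> Y) : R := sup (lip_quotients f).

Definition Lip0 (f : X -> Y) : Prop :=
  f 0 = 0 /\ has_ubound (lip_quotients f).

Definition bounded_linear (f : X -> Y) : Prop :=
  (forall (a : R) (x y : X), f (a *: x + y) = a *: f x + f y) /\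
  exists C : R, forall x : X, `|f x| <= C * `|x|.

(* Elements of L(Lip_0(X,Y),Y) are represented by maps (X -> Y) -> Y,
   of which only the restriction to Lip_0(X,Y) is relevant. *)
Definition lipdual_op (G : (X -> Y) -> Y) : Prop :=
  (forall (a : R) (f g : X -> Y), Lip0 f -> Lip0 g ->
      G (fun x => a *: f x + g x) = a *: G f + G g) /\
  exists C : R, forall f, Lip0 f -> `|G f| <= C * Lipnorm f.

Definition opnorm (G : (X -> Y) -> Y) : R :=
  sup [set `|G f| | f in [set f | Lip0 f /\ Lipnorm f <= 1]].

Definition delta (x : X) : (X -> Y) -> Y := fun f => f x.

Definition comb (s : seq (R * X)) : (X -> Y) -> Y :=
  fun f => \sum_(p <- s) p.1 *: delta p.2 f.

Definition beta_comb (s : seq (R * X)) : X := \sum_(p <- s) p.1 *: p.2.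

(* F_Y(X): norm-closure of span{delta_x} in L(Lip_0(X,Y),Y) *)
Definition FY (G : (X -> Y) -> Y) : Prop :=
  lipdual_op G /\
  forall e : R, 0 < e -> exists s : seq (R * X),
      opnorm (fun f => G f - comb s f) <= e.

(* beta_X^Y(G) = x, beta being the extension by continuity of beta_comb:
   x is the limit of beta_comb (s n) for finite combinations s n
   converging to G in operator norm. *)
Definition beta_is (G : (X -> Y) -> Y) (x : X) : Prop :=
  exists s : nat -> seq (R * X),
    (fun n => opnorm (fun f => G f - comb (s n) f)) @ \oo --> (0 : R) /\
    (fun n => beta_comb (s n)) @ \oo --> x.

Definition in_ker_beta (G : (X -> Y) -> Y) : Prop := FY G /\ beta_is G 0.

End LipFree.

(* Main.v *)
Require Import Defs.
From HB Require Import structures.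
From mathcomp Require Import all_boot all_order all_algebra.
From mathcomp Require Import all_classical all_reals all_analysis.
Import Order.TTheory GRing.Theory Num.Theory.
Import numFieldNormedType.Exports.
Local Open Scope classical_set_scope.
Local Open Scope ring_scope.

Set Implicit Arguments.
Section Helpers.
Variables (R : realType) (X Y : completeNormedModType R).
Implicit Types (f g : X -> Y).

Lemma lip_ub_of f (c : R) : (forall x y, `|f x - f y| <= c * `|x - y|) ->
  ubound (lip_quotients f) c.
Proof.
move=> H r [x [y [nxy ->]]].
have hp : 0 < `|x - y| by rewrite normr_gt0 subr_eq0.
by rewrite ler_pdivrMr.
Qed.

Lemma Lipnorm_le f (c : R) : (forall x y, `|f x - f y| <= c * `|x - y|) ->
  0 <= c -> Lipnorm f <= c.
Proof.
move=> H c0; rewrite /Lipnorm.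
case: (pselect (lip_quotients f !=set0)) => [ne|e].
  by apply: ge_sup => //; exact: lip_ub_of.
have -> : lip_quotients f = set0.
  by apply/funext => r; apply/propext; split => // hr; apply: e; exists r.
by rewrite sup0.
Qed.

Lemma Lipnorm_ge0 f : Lip0 f -> 0 <= Lipnorm f.
Proof.
move=> [_ hub]; rewrite /Lipnorm.
case: (pselect (lip_quotients f !=set0)) => [[r hr]|e].
  apply: le_trans (ub_le_sup hub hr).
  by case: hr => x [y [_ ->]]; rewrite divr_ge0.
have -> : lip_quotients f = set0.
  by apply/funext => r; apply/propext; split => // hr; apply: e; exists r.
by rewrite sup0.
Qed.

Lemma lip_bound f : Lip0 f -> forall x y, `|f x - f y| <= Lipnorm f * `|x - y|.
Proof.
move=> [f0 hub] x y.
have [->|nxy] := eqVneq x y; first by rewrite !subrr !normr0 mulr0.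
have hp : 0 < `|x - y| by rewrite normr_gt0 subr_eq0.
rewrite -ler_pdivrMr //; apply: (ub_le_sup hub).
by exists x, y.
Qed.

Lemma lip_bound0 f : Lip0 f -> forall x, `|f x| <= Lipnorm f * `|x|.
Proof.
move=> hf x; have := lip_bound hf x 0.
by case: hf => f0 _; rewrite f0 !subr0.
Qed.

Lemma Lip0_of f (c : R) : f 0 = 0 -> (forall x y, `|f x - f y| <= c * `|x - y|) -> Lip0 f.
Proof. by move=> f0 H; split => //; exists c; exact: lip_ub_of. Qed.


Lemma bl0 f : bounded_linear f -> f 0 = 0.
Proof.
move=> [lin _]; have h := lin 1 0 0; rewrite !scale1r addr0 in h.
by apply: (addrI (f 0)); rewrite addr0 -h.
Qed.

Lemma blB f : bounded_linear f -> forall x y, f (x - y) = f x - f y.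
Proof.
move=> hf x y; have [lin _] := hf.
have hN : f (- y) = - f y.
  by have := lin (-1) y 0; rewrite addr0 (bl0 hf) addr0 !scaleN1r.
by have := lin 1 x (- y); rewrite !scale1r hN.
Qed.

Lemma bl_comb f s : bounded_linear f -> comb s f = f (beta_comb s).
Proof.
move=> hf; have [lin _] := hf.
elim: s => [|p s IH]; first by rewrite /comb /beta_comb !big_nil (bl0 hf).
by rewrite /comb /beta_comb !big_cons lin -/(comb s f) IH.
Qed.

Lemma comb_lin s (a : R) g h :
  comb s (fun x => a *: g x + h x) = a *: comb s g + comb s h.
Proof.
rewrite /comb /delta scaler_sumr -big_split /=; apply: eq_bigr => p _.
by rewrite scalerDr !scalerA mulrC.
Qed.

Lemma comb_bound s g : Lip0 g ->
  `|comb s g| <= (\sum_(p <- s) `|p.1| * `|p.2|) * Lipnorm g.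
Proof.
move=> hg; rewrite /comb mulr_suml; apply: le_trans (ler_norm_sum _ _ _) _.
apply: ler_sum => p _; rewrite normrZ -mulrA ler_wpM2l //.
by rewrite mulrC /delta; exact: lip_bound0.
Qed.

Lemma comb_op (s : seq (R * X)) : lipdual_op (@comb R X Y s).
Proof.
split; first by move=> a g h _ _; exact: comb_lin.
by exists (\sum_(p <- s) `|p.1| * `|p.2|) => g hg; exact: comb_bound.
Qed.

Lemma Lip0_zero : Lip0 (fun _ : X => (0 : Y)).
Proof. by apply: (@Lip0_of _ 0) => // x y; rewrite subrr normr0 mul0r. Qed.

Lemma Lipnorm_zero : Lipnorm (fun _ : X => (0 : Y)) <= 1.
Proof. by apply: Lipnorm_le => // x y; rewrite subrr normr0 mulr_ge0. Qed.

Lemma op0 (G : (X -> Y) -> Y) : lipdual_op G -> G (fun _ => 0) = 0.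
Proof.
move=> [lin _]; have := lin 1 _ _ Lip0_zero Lip0_zero.
have -> : (fun x : X => 1 *: (0 : Y) + 0) = (fun _ => 0) by apply/funext => x; rewrite scaler0 addr0.
by rewrite scale1r => /eqP; rewrite -subr_eq subrr eq_sym => /eqP.
Qed.

Lemma opZ (G : (X -> Y) -> Y) g (a : R) : lipdual_op G -> Lip0 g -> G (fun x => a *: g x) = a *: G g.
Proof.
move=> hG hg; have [lin _] := hG; have := lin a _ _ hg Lip0_zero.
have -> : (fun x : X => a *: g x + 0) = (fun x => a *: g x) by apply/funext => x; rewrite addr0.
by rewrite op0 // addr0.
Qed.

Lemma opnorm_ub (H : (X -> Y) -> Y) g : (exists c, forall h, Lip0 h -> Lipnorm h <= 1 -> `|H h| <= c) ->
  Lip0 g -> Lipnorm g <= 1 -> `|H g| <= opnorm H.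
Proof.
move=> [c hc] hg hg1; apply: (ub_le_sup); last by exists g.
by exists c => r [h [hh hh1] <-]; exact: hc.
Qed.

Lemma key (G : (X -> Y) -> Y) (s : seq (R * X)) f : lipdual_op G -> Lip0 f ->
  `|G f - comb s f| <= opnorm (fun g => G g - comb s g) * (`|Lipnorm f| + 1).
Proof.
move=> hG hf; set L := `|Lipnorm f| + 1.
have L0 : 0 < L by rewrite ltr_pwDr.
have Li0 : 0 <= L^-1 by rewrite invr_ge0 ltW.
set g := fun x => L^-1 *: f x.
have hgb : forall x y, `|g x - g y| <= 1 * `|x - y|.
  move=> x y; rewrite /g -scalerBr normrZ (ger0_norm Li0).
  rewrite ler_pdivrMl // mulrA; apply: le_trans (lip_bound hf x y) _.
  by rewrite mulr1 ler_wpM2r // (le_trans (ler_norm _)) // lerDl.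
have hg : Lip0 g by apply: (@Lip0_of _ 1) => //; rewrite /g; case: hf => -> _; rewrite scaler0.
have hg1 : Lipnorm g <= 1 by exact: Lipnorm_le.
have Hg : G g - comb s g = L^-1 *: (G f - comb s f).
  rewrite /g opZ // scalerBr; congr (_ - _).
  rewrite /comb /delta scaler_sumr; apply: eq_bigr => p _.
  by rewrite !scalerA mulrC.
have hb : exists c, forall h, Lip0 h -> Lipnorm h <= 1 -> `|G h - comb s h| <= c.
  have [_ [C hC]] := hG.
  exists (`|C| + \sum_(p <- s) `|p.1| * `|p.2|) => h hh hh1.
  apply: le_trans (ler_normB _ _) _; apply: lerD.
    apply: le_trans (hC h hh) _; apply: le_trans (ler_norm _) _.
    rewrite normrM (ger0_norm (Lipnorm_ge0 hh)).
    by rewrite -[leRHS]mulr1 ler_wpM2l.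
  apply: le_trans (comb_bound s hh) _.
  rewrite -[leRHS]mulr1 ler_wpM2l //; apply: sumr_ge0 => p _; exact: mulr_ge0.
have := opnorm_ub (fun h => G h - comb s h) hb hg hg1; rewrite Hg normrZ (ger0_norm Li0).
by rewrite ler_pdivrMl // mulrC.
Qed.

End Helpers.
Unset Implicit Arguments.

Lemma opnorm_cst0 (R : realType) (X Y : completeNormedModType R) :
  @opnorm R X Y (fun _ => 0) = 0.
Proof.
rewrite /opnorm.
have -> : [set `|(fun _ : X -> Y => (0 : Y)) g| | g in
    [set g | @Lip0 R X Y g /\ Lipnorm g <= 1]] = [set 0].
  apply/seteqP; split => r.
    by case=> g _ <-; rewrite normr0.
  move=> ->; exists (fun _ => 0); last by rewrite normr0.
  by split; [exact: Lip0_zero | exact: Lipnorm_zero].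
by rewrite sup1.
Qed.


Theorem mainTheorem11 (R : realType) (X Y : completeNormedModType R)
  (hY : exists y : Y, y != 0) (f : X -> Y) :
  bounded_linear f <->
  (Lip0 f /\ forall G : (X -> Y) -> Y, in_ker_beta G -> G f = 0).
Proof.
split.
- move=> hf; have [lin [C hC]] := hf.
  have hfl : forall x y, `|f x - f y| <= `|C| * `|x - y|.
    move=> x y; rewrite -(blB hf); apply: le_trans (hC _) _.
    by rewrite ler_wpM2r // ler_norm.
  have Lf : Lip0 f := @Lip0_of _ _ _ f _ (bl0 hf) hfl.
  split => // G [[hG _] [s [hs1 hs2]]].
  apply/eqP; rewrite -normr_le0; apply/ler_addgt0Pr => e e0; rewrite add0r.
  set L := `|Lipnorm f| + 1.
  have L0 : 0 < L by rewrite ltr_pwDr.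
  have e2 : 0 < e / 2 / L by rewrite !divr_gt0.
  have h1 := cvgr0_norm_lt _ hs1 _ e2.
  have h2 := cvgr0_norm_lt _ hs2 _ e2.
  have [n [hn1 hn2]] : exists n, `|opnorm (fun g => G g - comb (s n) g)| < e / 2 / L
      /\ `|beta_comb (s n)| < e / 2 / L.
    near \oo => n; exists n; split; near: n; [exact: h1 | exact: h2].
    Unshelve. all: end_near.
  rewrite -(subrK (comb (s n) f) (G f)).
  apply: le_trans (ler_normD _ _) _; rewrite [leRHS](splitr e); apply: lerD.
    apply: le_trans (key (s n) hG Lf) _.
    apply: le_trans (_ : `|opnorm (fun g => G g - comb (s n) g)| * L <= _).
      by rewrite ler_wpM2r ?ler_norm // ltW.
    by rewrite -(ler_pdivlMr _ _ L0) ltW.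
  rewrite (bl_comb (s n) hf); apply: le_trans (lip_bound0 Lf _) _.
  apply: le_trans (_ : L * `|beta_comb (s n)| <= _).
    by rewrite ler_wpM2r // (le_trans (ler_norm _)) // lerDl.
  by rewrite mulrC -(ler_pdivlMr _ _ L0) ltW.
- move=> [Lf HG]; split; last by exists (Lipnorm f) => x; exact: lip_bound0.
  move=> a x y.
  pose s : seq (R * X) := [:: (1, a *: x + y); (- a, x); (-1, y)].
  have hk : in_ker_beta (@comb R X Y s).
    have z : opnorm (fun g => @comb R X Y s g - comb s g) = 0.
      have -> : (fun g => @comb R X Y s g - comb s g) = (fun _ => 0).
        by apply/funext => g; rewrite subrr.
      exact: opnorm_cst0.
    split; first by split; [exact: comb_op | move=> e e0; exists s; rewrite z ltW].
    exists (fun _ => s); split; first by rewrite z; exact: cvg_cst.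
    have -> : beta_comb s = 0.
      rewrite /beta_comb /s !big_cons big_nil /= scale1r scaleN1r scaleNr addr0.
      by rewrite -opprD subrr.
    exact: cvg_cst.
  have := HG _ hk; rewrite /comb /delta /s !big_cons big_nil /= scale1r scaleN1r.
  rewrite addr0 scaleNr => h.
  by apply/eqP; rewrite -subr_eq0 opprD h.
Qed.
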